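(* Assume the setting of the context and suppose Assumption (A5) holds. Then for any compact interval $I\subset(0,\infty)$, \[\limsup_{n\rightarrow \infty}\sup_{t\in I}\alpha(n)^{-\kappa}h_{G^n}^{-1}(\gamma(n)t)<\infty.\]
   Context: Let $(E,d_E)$ be a metric space and $F\subseteq E$ such that $F\cap\overline{B}_E(x,r)$ is compact for all $x\in E$, $r>0$ ($\overline{B}_E$, $B_E$ closed and open balls in $E$). Let $d_F:=d_E|_{F\times F}$, $\rho\in F$, and $\nu$ a Radon measure of full support on $(F,d_F)$ (extended to $E$ by $\nu(A):=\nu(A\cap F)$). For a locally finite connected graph $G$ with at least two vertices and distinguished vertex $\rho(G)$: $d_G$ is the shortest-path metric, $B_G(x,r)$ the open $d_G$-ball; $\mu^G$ a symmetric weight with $\mu^G_{xy}>0$ iff $\{x,y\}$ is an edge; $\mu^G_x:=\sum_y\mu^G_{xy}$; $\nu^G(A):=\sum_{x\in A}\mu^G_x$; $P_G(x,y)=\mu^G_{xy}/\mu^G_x$; generator $\mathcal{L}_Gf(x)=\sum_yP_G(x,y)(f(y)-f(x))$; $(f,g)_G:=\sum_xf(x)g(x)\nu^G(\{x\})$; $\mathcal{E}_G(f,g):=-(\mathcal{L}_Gf,g)_G$ on $\mathcal{F}_G:=\{f:\mathcal{E}_G(f,f)<\infty\}$; resistance metric $R_G(x,y):=\sup\{|f(x)-f(y)|^2/\mathcal{E}_G(f,f):f\in\mathcal{F}_G,\mathcal{E}_G(f,f)>0\}$; $V_G(r):=\nu^G(\{x:R_G(\rho(G),x)\le r\})$, $h_G(r):=rV_G(r)$,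 $h_G^{-1}(m):=\sup\{r:h_G(r)\le m\}$. $(G^n)_{n\ge1}$ are such graphs with $V(G^n)\subseteq E$, $\rho(G^n)=\rho$; $\nu^n:=\nu^{G^n}$. $(\alpha(n)),(\beta(n)),(\gamma(n))$ are non-negative sequences diverging to $\infty$. Assumption (A5): (i) there is $c>0$ with $d_{G^n}(x,y)\ge c\alpha(n)d_E(x,y)$ for all $x,y\in V(G^n)$, $n\ge1$, and a non-negative $\tilde\alpha(n)=o(\alpha(n))$ such that for each $r>0$ there are $c'<\infty$, $n_0$ with $d_{G^n}(x,y)\le c'\alpha(n)d_E(x,y)+\tilde\alpha(n)$ for all $x,y\in V(G^n)\cap B_E(\rho,r)$, $n\ge n_0$; (ii) for every $x\in F$, $r>0$, $\lim_n\beta(n)^{-1}\nu^n(B_E(x,r))=\nu(B_E(x,r))$; (iii) for some $\kappa\in(0,\infty)$ there exist constants $c_1,c_2,c_3\in(0,\infty)$ and an integer $n_0$ such that $R_{G^n}(x,y)\le c_1d_{G^n}(x,y)^\kappa$ for all $x,y\in V(G^n)$, and $c_2\gamma(n)\le\alpha(n)^\kappa\beta(n)\le c_3\gamma(n)$, for all $n\ge n_0$. *)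

(* Defs.v *)
From HB Require Import structures.
From mathcomp Require Import all_boot all_order all_algebra.
From mathcomp Require Import all_classical all_reals all_analysis.
Set Implicit Arguments. Unset Strict Implicit. Unset Printing Implicit Defensive.
Import Order.TTheory GRing.Theory Num.Theory.
Local Open Scope classical_set_scope.
Local Open Scope ring_scope.

Section Defs.
Variables (R : realType) (E : choiceType).

Definition is_metric (d : E -> E -> R) : Prop :=
  [/\ forall x y, d x y = 0 <-> x = y,
      forall x y, d x y = d y x &
      forall x y z, d x z <= d x y + d y z].

Definition dball (d : E -> E -> R) (x : E) (r : R) : set E := [set y | d x y < r].
Definition dcball (d : E -> E -> R) (x : E) (r : R) : set E := [set y | d x y <= r].

Definition dopen (d : E -> E -> R) : set (set E) :=
  [set A | forall x, A x -> exists2 r, 0 < r & dball d x r `<=` A].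

Definition dcompact (d : E -> E -> R) (K : set E) : Prop :=
  forall (I : Type) (U : I -> set E), (forall i, dopen d (U i)) ->
    K `<=` \bigcup_(i in [set: I]) U i ->
    exists2 J : set I, finite_set J & K `<=` \bigcup_(i in J) U i.

(* {x,y} is an edge iff 0 < mu x y *)
Definition connects (mu : E -> E -> R) (k : nat) (x y : E) : Prop :=
  exists s : nat -> E, [/\ s 0%N = x, s k = y &
     forall i, (i < k)%N -> 0 < mu (s i) (s i.+1)].

Definition wgraph (V : set E) (mu : E -> E -> R) : Prop :=
  (exists x y, [/\ V x, V y & x <> y]) /\
  [/\ (forall x y, mu x y = mu y x),
      (forall x y, 0 <= mu x y),
      (forall x y, 0 < mu x y -> V x /\ V y /\ x <> y),
      (forall x, V x -> finite_set [set y | 0 < mu x y])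
    & (forall x y, V x -> V y -> exists k, connects mu k x y)].

Definition gdist (mu : E -> E -> R) (x y : E) : R :=
  inf [set (k%:R : R) | k in [set k | connects mu k x y]].

Definition gmeas (V : set E) (mu : E -> E -> R) (A : set E) : \bar R :=
  (\esum_(x in A `&` V) \esum_(y in V) (mu x y)%:E)%E.

Definition energy (V : set E) (mu : E -> E -> R) (f : E -> R) : \bar R :=
  ((2^-1)%:E * \esum_(p in [set p : E * E | V p.1 /\ V p.2])
       (mu p.1 p.2 * (f p.1 - f p.2) ^+ 2)%:E)%E.

Definition resist (V : set E) (mu : E -> E -> R) (x y : E) : \bar R :=
  ereal_sup [set ((f x - f y) ^+ 2 / fine (energy V mu f))%:E |
               f in [set f : E -> R | (0 < energy V mu f < +oo)%E]].

Definition rvol (V : set E) (mu : E -> E -> R) (rho : E) (r : R) : \bar R :=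
  gmeas V mu [set x | V x /\ (resist V mu rho x <= r%:E)%E].

Definition hfun (V : set E) (mu : E -> E -> R) (rho : E) (r : R) : \bar R :=
  (r%:E * rvol V mu rho r)%E.

Definition hinv (V : set E) (mu : E -> E -> R) (rho : E) (m : R) : \bar R :=
  ereal_sup [set r%:E | r in [set r : R | 0 <= r /\ (hfun V mu rho r <= m%:E)%E]].

End Defs.

(* Main.v *)
Require Import Defs.
From HB Require Import structures.
From mathcomp Require Import all_boot all_order all_algebra.
From mathcomp Require Import all_classical all_reals all_analysis.
From mathcomp Require Import ring lra.
Import Order.TTheory GRing.Theory Num.Theory.
Local Open Scope classical_set_scope.
Local Open Scope ring_scope.

Lemma esum_subset (R : realType) (T : choiceType) (A B : set T) (a : T -> \bar R) :
  A `<=` B -> (forall x, B x -> (0 <= a x)%E) ->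
  (\esum_(i in A) a i <= \esum_(i in B) a i)%E.
Proof.
move=> AB a0; rewrite esum_mkcond [X in (_ <= X)%E]esum_mkcond.
apply: le_esum => i _.
case: ifPn => iA; first by rewrite ifT // inE; apply: AB; move: iA; rewrite inE.
by case: ifPn => // iB; apply: a0; move: iB; rewrite inE.
Qed.

Lemma gmeas_subset (R : realType) (E : choiceType) (V : set E) (mu : E -> E -> R) A B :
  (forall x y, 0 <= mu x y) -> A `&` V `<=` B `&` V ->
  (gmeas V mu A <= gmeas V mu B)%E.
Proof.
move=> mu0 AB; apply: esum_subset => // x _; apply: esum_ge0 => y _.
by rewrite lee_fin.
Qed.

Lemma gdist_ge0 (R : realType) (E : choiceType) (mu : E -> E -> R) x y k :
  connects mu k x y -> 0 <= gdist mu x y.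
Proof.
move=> ck; rewrite /gdist.
apply: lb_le_inf; first by exists k%:R, k.
by move=> _ [j _ <-]; rewrite ler0n.
Qed.
Theorem lemma4p5 (R : realType) (E : pointedType) (d : E -> E -> R)
  (F : set E) (rho : E)
  (nu : {measure set (g_sigma_algebraType (dopen d)) -> \bar R})
  (V : nat -> set E) (mu : nat -> E -> E -> R)
  (alpha beta gamma : nat -> R) (kappa : R) :
  is_metric d ->
  (forall x r, 0 < r -> dcompact d (F `&` dcball d x r)) ->
  F rho ->
  (* nu is a Radon measure on F (extended by zero to E) with full support *)
  nu (~` F) = 0%E ->
  (forall x, F x -> exists2 r, 0 < r & (nu (dball d x r) < +oo)%E) ->
  (forall A : set (g_sigma_algebraType (dopen d)), measurable A ->
     nu A = ereal_sup [set nu K | K in [set K | dcompact d K /\ K `<=` A `&` F]]) ->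
  (forall x r, F x -> 0 < r -> (0 < nu (dball d x r))%E) ->
  (* the graphs G^n *)
  (forall n, wgraph (V n) (mu n) /\ V n rho) ->
  (forall n, 0 <= alpha n) -> alpha @ \oo --> +oo ->
  (forall n, 0 <= beta n) -> beta @ \oo --> +oo ->
  (forall n, 0 <= gamma n) -> gamma @ \oo --> +oo ->
  (* (A5)(i) *)
  (exists2 c, 0 < c & forall n x y, V n x -> V n y ->
      c * alpha n * d x y <= gdist (mu n) x y) ->
  (exists2 alphat : nat -> R, (forall n, 0 <= alphat n) /\
      (fun n => alphat n / alpha n) @ \oo --> 0 &
    forall r, 0 < r -> exists c' : R, exists n0 : nat, forall n x y, (n0 <= n)%N ->
      V n x -> V n y -> dball d rho r x -> dball d rho r y ->
      gdist (mu n) x y <= c' * alpha n * d x y + alphat n) ->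
  (* (A5)(ii) *)
  (forall x r, F x -> 0 < r ->
     (fun n => ((beta n)^-1)%:E * gmeas (V n) (mu n) (dball d x r))%E @ \oo -->
       nu (dball d x r)) ->
  (* (A5)(iii) *)
  0 < kappa ->
  (exists c1 c2 c3 : R, exists n0 : nat, [/\ 0 < c1, 0 < c2, 0 < c3 &
     forall n, (n0 <= n)%N ->
       (forall x y, V n x -> V n y ->
          (resist (V n) (mu n) x y <= (c1 * gdist (mu n) x y `^ kappa)%:E)%E) /\
       c2 * gamma n <= alpha n `^ kappa * beta n <= c3 * gamma n]) ->
  (* conclusion, for every compact interval I = [a,b] in (0,oo) *)
  forall a b : R, 0 < a -> a <= b ->
  (limn_esup (fun n => ereal_sup
      [set ((alpha n `^ (- kappa))%:E * hinv (V n) (mu n) rho (gamma n * t))%E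
        | t in `[a, b]]) < +oo)%E.
Proof.
move=> dmet Fcpt Frho nuF nuloc nureg nusupp Gn alpha0 alphaoo beta0 betaoo
  gamma0 gammaoo [c c0 A5i1] [alphat [alphat0 alphatcv] A5i2] A5ii kappa0
  [c1 [c2 [c3 [n0 [c10 c20 c30 A5iii]]]]] a b a0 ab.
have [c' [n1 Hc']] := A5i2 1 ltr01.
have l0 : (0 < nu (dball d rho 1))%E := nusupp rho 1 Frho ltr01.
have [eps eps0 epsl] : exists2 eps : R, 0 < eps & (eps%:E < nu (dball d rho 1))%E.
  move: l0; case: (nu (dball d rho 1)) => [r r0| _ |//].
    exists (r / 2); first by rewrite divr_gt0.
    by rewrite lte_fin ltr_pdivrMr // ltr_pMr // ?ltr1n // -lte_fin.
  by exists 1 => //; rewrite ltry.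
have cvl := A5ii rho 1 Frho ltr01.
have ev1 : \forall n \near \oo,
    (eps%:E < ((beta n)^-1)%:E * gmeas (V n) (mu n) (dball d rho 1))%E.
  exact: cvl _ (open_ereal_gt' epsl).
have ev2 : \forall n \near \oo, 0 < alpha n by exact: cvgry_gt alphaoo 0.
have ev3 : \forall n \near \oo, 0 < beta n by exact: cvgry_gt betaoo 0.
have ev4 : \forall n \near \oo, 0 < gamma n by exact: cvgry_gt gammaoo 0.
have ev5 : \forall n \near \oo, `|alphat n / alpha n| < 1.
  exact: cvgr0_norm_lt alphatcv 1 ltr01.
have ev6 : \forall n \near \oo, (maxn n0 n1 <= n)%N.
  by exists (maxn n0 n1).
have [N _ HN] : \forall n \near \oo, [/\ (eps%:E < ((beta n)^-1)%:E * gmeas (V n) (mu n) (dball d rho 1))%E,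
   0 < alpha n, 0 < beta n, 0 < gamma n & `|alphat n / alpha n| < 1 /\ (maxn n0 n1 <= n)%N].
  by near=> n; split; [near: n; exact: ev1|near: n; exact: ev2|near: n; exact: ev3
    |near: n; exact: ev4|split; near: n; [exact: ev5|exact: ev6]].
set C := Num.max c' 0 + 1.
have C0 : 0 < C by rewrite /C ltr_wpDl // le_max lexx orbT.
set M := c1 * C `^ kappa + b / (c2 * eps) + 1.
have dge0 : forall x y, 0 <= d x y.
  move: dmet => [d0 dsym dtri] x y.
  have := dtri x y x; rewrite (d0 x x).2 // (dsym y x) -mulr2n.
  by rewrite pmulrn_lge0.
have key : forall n, (N <= n)%N -> forall t, a <= t <= b ->
    (((alpha n) `^ (- kappa))%:E * hinv (V n) (mu n) rho (gamma n * t) <= M%:E)%E.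
  move=> n Nn t /andP[ta tb].
  have [evb alp bet gam [alt nn]] := HN n Nn.
  have [Hres Hab] := A5iii n (leq_trans (leq_maxl _ _) nn).
  have [[_ [musym mu0 muV mufin muconn]] Vrho] := Gn n.
  have alt' : alphat n <= alpha n.
    move: alt; rewrite ger0_norm ?divr_ge0 ?alphat0 ?alpha0 //.
    by rewrite ltr_pdivrMr // mul1r => /ltW.
  have apk : 0 < alpha n `^ kappa := powR_gt0 _ alp.
  have Mge : c1 * C `^ kappa <= M.
    rewrite /M -addrA lerDl addr_ge0 // divr_ge0 //; first by apply: (le_trans (ltW a0)).
    by rewrite mulr_ge0 // ltW.
  have Hres' : forall x, V n x -> dball d rho 1 x ->
      (resist (V n) (mu n) rho x <= (M * alpha n `^ kappa)%:E)%E.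
    move=> x Vx Bx.
    apply: le_trans (Hres rho x Vrho Vx) _; rewrite lee_fin.
    have [k ck] := muconn rho x Vrho Vx.
    have g0 := @gdist_ge0 _ _ _ _ _ _ ck.
    have rB : dball d rho 1 rho by by case: dmet => d0 _ _; rewrite /dball /= (d0 rho rho).2.
    have gle : gdist (mu n) rho x <= C * alpha n.
      apply: le_trans (Hc' n rho x (leq_trans (leq_maxr _ _) nn) Vrho Vx rB Bx) _.
      have m0 : 0 <= Num.max c' 0 by rewrite le_max lexx orbT.
      have cm : c' <= Num.max c' 0 by rewrite le_max lexx.
      have d1 : d rho x <= 1 by apply: ltW; exact: Bx.
      have h1 : c' * alpha n * d rho x <= Num.max c' 0 * alpha n.
        apply: le_trans (_ : Num.max c' 0 * alpha n * d rho x <= _).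
          by apply: ler_wpM2r => //; apply: ler_wpM2r => //; exact: ltW.
        by rewrite -[X in _ <= X]mulr1; apply: ler_wpM2l => //; rewrite mulr_ge0 // ltW.
      by rewrite /C mulrDl mul1r; apply: lerD.
    have gk : gdist (mu n) rho x `^ kappa <= C `^ kappa * alpha n `^ kappa.
      rewrite -powRM ?(ltW C0) ?(ltW alp) //.
      apply: ge0_ler_powR => //; first exact: ltW.
      by rewrite nnegrE mulr_ge0 // ltW.
    apply: le_trans (_ : c1 * (C `^ kappa * alpha n `^ kappa) <= _).
      by apply: ler_wpM2l => //; exact: ltW.
    by rewrite mulrA; apply: ler_wpM2r => //; exact: ltW.
  have Hg : ((beta n * eps)%:E <= gmeas (V n) (mu n) (dball d rho 1))%E.
    by move: evb => /ltW; rewrite lee_pdivlMl // EFinM.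
  have Hvol : forall r, M * alpha n `^ kappa <= r ->
      (gmeas (V n) (mu n) (dball d rho 1) <= rvol (V n) (mu n) rho r)%E.
    move=> r Mr; rewrite /rvol; apply: gmeas_subset => // x [Bx Vx]; split=> //; split=> //.
    by apply: le_trans (Hres' x Vx Bx) _; rewrite lee_fin.
  have Mge2 : b / (c2 * eps) + 1 <= M.
    by rewrite /M -addrA lerDr mulr_ge0 ?powR_ge0 // ltW.
  have Hh : (hinv (V n) (mu n) rho (gamma n * t) <= (M * alpha n `^ kappa)%:E)%E.
    rewrite /hinv; apply: ge_ereal_sup => _ [r [r0 hr] <-]; rewrite lee_fin.
    rewrite leNgt; apply/negP => Mr.
    move: hr; rewrite /hfun.
    have h1 : ((r * (beta n * eps))%:E <= r%:E * rvol (V n) (mu n) rho r)%E.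
      rewrite EFinM; apply: lee_wpmul2l; first by rewrite lee_fin.
      exact: le_trans Hg (Hvol r (ltW Mr)).
    move=> h2; have := le_trans h1 h2; rewrite lee_fin => h.
    have be0 : 0 < beta n * eps by rewrite mulr_gt0.
    have e1 : M * alpha n `^ kappa * (beta n * eps) < r * (beta n * eps).
      by rewrite ltr_pM2r.
    have M0 : 0 <= M.
      apply: le_trans Mge2; rewrite addr_ge0 // divr_ge0 //.
      exact: le_trans (ltW a0) ab.
      by rewrite mulr_ge0 // ltW.
    have e2 : c2 * gamma n * (M * eps) <= alpha n `^ kappa * beta n * (M * eps).
      by apply: ler_wpM2r; [rewrite mulr_ge0 // ltW|case/andP: Hab].
    have e3 : b < M * (c2 * eps).
      have ce : 0 < c2 * eps by rewrite mulr_gt0.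
      apply: lt_le_trans (_ : (b / (c2 * eps) + 1) * (c2 * eps) <= _).
        by rewrite mulrDl mul1r divfK ?gt_eqF // ltrDl.
      by apply: ler_wpM2r => //; exact: ltW.
    have e4 : gamma n * t < gamma n * (M * (c2 * eps)).
      by apply: (@le_lt_trans _ _ (gamma n * b)); [apply: ler_wpM2l => //; exact: ltW|rewrite ltr_pM2l].
    have : gamma n * t < r * (beta n * eps).
      apply: lt_le_trans e4 _.
      apply: le_trans (_ : M * alpha n `^ kappa * (beta n * eps) <= _); last exact: ltW.
      have -> : gamma n * (M * (c2 * eps)) = c2 * gamma n * (M * eps) by ring.
      apply: le_trans e2 _.
      have -> : alpha n `^ kappa * beta n * (M * eps) = M * alpha n `^ kappa * (beta n * eps) by ring.
      by [].
    move=> hh.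
    by move: hh; rewrite ltNge h.
  apply: le_trans (_ : ((alpha n `^ (- kappa))%:E * (M * alpha n `^ kappa)%:E <= _)%E).
    by apply: lee_wpmul2l => //; rewrite lee_fin powR_ge0.
  rewrite -EFinM powRN lee_fin mulrC -mulrA mulfV ?mulr1 // gt_eqF //.
set u := (X in limn_esup X).
apply: (@le_lt_trans _ _ M%:E); last exact: ltry.
apply: (@le_trans _ _ (ereal_sup (u @` [set n | (N <= n)%N]))).
  apply: ereal_inf_lbound; exists [set n | (N <= n)%N] => //; exists N => //.
apply: ge_ereal_sup => _ [n Nn <-]; apply: ge_ereal_sup => _ [t tab <-].
apply: key => //.
Unshelve. all: by end_near. Qed.
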